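(* In the 1SDI setting where Alice measures $A_0=\sigma_x$, $A_1=\sigma_y$, Bob measures $B_0=\sigma_x$, $B_1=\sigma_y$, and Charlie is a black box, the Mermin family $P^V_{MF}$ ($0<V\le1$) demonstrates tripartite steering if and only if $V>\frac1{\sqrt2}$.
   Context: Outcomes and settings: $a,b,c,x,y,z\in\{0,1\}$. For a qubit observable $O$ with eigenvalues $\pm1$, the measurement has projectors $M_0=(\mathbb 1+O)/2$, $M_1=(\mathbb 1-O)/2$; $M^A_{a|x}$, $M^B_{b|y}$ denote the projectors of $A_x$, $B_y$. Mermin family: $P^V_{MF}(abc|xyz)=\frac{1+(-1)^{a\oplus b\oplus c\oplus xy\oplus yz\oplus xz}\,\delta_{x\oplus y\oplus1,z}\,V}{8}$. 1SDI fully LHS-LHV model: $P(abc|xyz)=\sum_\lambda q_\lambda \mathrm{Tr}(M^A_{a|x}\rho^\lambda_A)\mathrm{Tr}(M^B_{b|y}\rho^\lambda_B)P_\lambda(c|z)$ with probabilities $q_\lambda$, qubit states $\rho^\lambda_A,\rho^\lambda_B$ and arbitrary conditional distributions $P_\lambda(c|z)$. Tripartite steering in the 1SDI scenario: $P$ demonstrates tripartite steering iff (i) it admits no 1SDI fully LHS-LHV model, and (ii) there is no finite $d$, state $\rho^{ABC}=\sum_\lambda r_\lambda\rho^\lambda_{AB}\otimes\rho^\lambda_C$ on $\mathbb C^2\otimes\mathbb C^2\otimes\mathbb C^d$ (separable across $AB|C$) and POVMs $\{N_{c|z}\}_c$ on $\mathbb C^d$ with $P(abc|xyz)=\mathrm{Tr}[(M^A_{a|x}\otimes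 M^B_{b|y}\otimes N_{c|z})\rho^{ABC}]$. *)

(* Defs.v *)
(* Complex scalars: an arbitrary numClosedFieldType C
   (algebraically closed field with conjugation and order, e.g. the complex numbers). *)
From HB Require Import structures.
From mathcomp Require Import all_boot all_order all_algebra.
Set Implicit Arguments. Unset Strict Implicit. Unset Printing Implicit Defensive.
Import Order.TTheory GRing.Theory Num.Theory.
Local Open Scope ring_scope.

Section Quantum.
Variable C : numClosedFieldType.

Definition adjmx m n (A : 'M[C]_(m, n)) : 'M[C]_(n, m) := (map_mx Num.conj A)^T.

(* positive semidefinite: v^dagger A v >= 0 for every complex vector v
   (over C this also forces A to be Hermitian) *)
Definition psd n (A : 'M[C]_n) : Prop :=
  forall v : 'cV[C]_n, 0 <= (adjmx v *m A *m v) 0 0.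

Definition is_state n (rho : 'M[C]_n) : Prop := psd rho /\ \tr rho = 1.

Definition is_povm n (N : bool -> 'M[C]_n) : Prop :=
  (forall c, psd (N c)) /\ N false + N true = 1%:M.

(* splitting an index of C^(m*n) = C^m (x) C^n *)
Definition split_idx m n (k : 'I_(m * n)) : 'I_m * 'I_n :=
  enum_val (cast_ord (esym (mxvec_cast m n)) k).

Definition kron m1 n1 m2 n2 (A : 'M[C]_(m1, n1)) (B : 'M[C]_(m2, n2))
  : 'M[C]_(m1 * m2, n1 * n2) :=
  \matrix_(i, j) (A (split_idx i).1 (split_idx j).1 * B (split_idx i).2 (split_idx j).2).

Definition sigma_x : 'M[C]_2 :=
  \matrix_(i, j) (if (val i == val j) then 0 else 1).
Definition sigma_y : 'M[C]_2 :=
  \matrix_(i, j) (if (val i == val j) then 0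
                  else if val i == 0%N then - 'i else 'i).

Definition proj_of (O : 'M[C]_2) (a : bool) : 'M[C]_2 :=
  if a then 2^-1 *: (1%:M - O) else 2^-1 *: (1%:M + O).

Definition obs (x : bool) : 'M[C]_2 := if x then sigma_y else sigma_x.
Definition MA (a x : bool) : 'M[C]_2 := proj_of (obs x) a.
Definition MB (b y : bool) : 'M[C]_2 := proj_of (obs y) b.

(* behaviours P(abc|xyz) *)
Definition behaviour := bool -> bool -> bool -> bool -> bool -> bool -> C.

Definition mermin (V : C) : behaviour := fun a b c x y z =>
  (1 + (-1) ^+ (a (+) b (+) c (+) (x && y) (+) (y && z) (+) (x && z))
       * (if (x (+) y (+) true) == z then 1 else 0) * V) / 8.

Definition prob_vec n (q : 'I_n -> C) : Prop :=
  (forall l, 0 <= q l) /\ \sum_(l < n) q l = 1.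

Definition cond_dist (p : bool -> bool -> C) : Prop :=
  (forall c z, 0 <= p c z) /\ (forall z, p false z + p true z = 1).

(* 1SDI fully LHS-LHV model (finitely many hidden variables lambda) *)
Definition lhs_lhv (P : behaviour) : Prop :=
  exists (n : nat) (q : 'I_n -> C) (rhoA rhoB : 'I_n -> 'M[C]_2)
         (pl : 'I_n -> bool -> bool -> C),
    prob_vec q /\ (forall l, is_state (rhoA l)) /\ (forall l, is_state (rhoB l))
    /\ (forall l, cond_dist (pl l))
    /\ forall a b c x y z,
         P a b c x y z = \sum_(l < n) q l * \tr (MA a x *m rhoA l)
                                        * \tr (MB b y *m rhoB l) * pl l c z.

Definition ab_c_separable_model (P : behaviour) : Prop :=
  exists (d n : nat) (r : 'I_n -> C) (rhoAB : 'I_n -> 'M[C]_(2 * 2))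
         (rhoC : 'I_n -> 'M[C]_d) (N : bool -> bool -> 'M[C]_d),
    prob_vec r /\ (forall l, is_state (rhoAB l)) /\ (forall l, is_state (rhoC l))
    /\ (forall z, is_povm (N^~ z))
    /\ let rho : 'M[C]_(2 * 2 * d) := \sum_(l < n) r l *: kron (rhoAB l) (rhoC l) in
       forall a b c x y z,
         P a b c x y z = \tr (kron (kron (MA a x) (MB b y)) (N c z) *m rho).

Definition tripartite_steering (P : behaviour) : Prop :=
  ~ lhs_lhv P /\ ~ ab_c_separable_model P.

End Quantum.

(* Main.v *)
Require Import Defs.
From HB Require Import structures.
From mathcomp Require Import all_boot all_order all_algebra.
From mathcomp Require Import ring.
Set Implicit Arguments. Unset Strict Implicit. Unset Printing Implicit Defensive.
Import Order.TTheory GRing.Theory Num.Theory.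
Local Open Scope ring_scope.



Section Gen.
Variable C : numClosedFieldType.

Lemma split_mi m n (i : 'I_m) (j : 'I_n) : split_idx (mxvec_index i j) = (i, j).
Proof. by rewrite /split_idx /mxvec_index cast_ordK enum_rankK. Qed.

Lemma kronE m1 n1 m2 n2 (A : 'M[C]_(m1, n1)) (B : 'M[C]_(m2, n2)) i1 i2 j1 j2 :
  kron A B (mxvec_index i1 i2) (mxvec_index j1 j2) = A i1 j1 * B i2 j2.
Proof. by rewrite /kron mxE !split_mi. Qed.

Lemma sum_pair m n (F : 'I_(m * n) -> C) :
  \sum_(k < m * n) F k = \sum_(i < m) \sum_(j < n) F (mxvec_index i j).
Proof.
rewrite (reindex (fun p : 'I_m * 'I_n => mxvec_index p.1 p.2)) /=.
  by rewrite pair_big /=.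
have [g h1 h2] := curry_mxvec_bij m n.
exists g => [[i j] _|k _]; [exact: (h1 (i, j)) | by move: (h2 k isT); case: (g k)].
Qed.

Lemma mulmx_kron m1 n1 p1 m2 n2 p2 (A : 'M[C]_(m1, n1)) (B : 'M[C]_(m2, n2))
  (A' : 'M[C]_(n1, p1)) (B' : 'M[C]_(n2, p2)) :
  kron A B *m kron A' B' = kron (A *m A') (B *m B').
Proof.
apply/matrixP => i j; case/mxvec_indexP: i => i1 i2; case/mxvec_indexP: j => j1 j2.
rewrite mxE kronE !mxE sum_pair big_distrl /=; apply: eq_bigr => k1 _.
rewrite big_distrr /=; apply: eq_bigr => k2 _; rewrite !kronE; ring.
Qed.

Lemma tr_kron m n (A : 'M[C]_m) (B : 'M[C]_n) : \tr (kron A B) = \tr A * \tr B.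
Proof.
rewrite /mxtrace sum_pair big_distrl /=; apply: eq_bigr => i _.
by rewrite big_distrr /=; apply: eq_bigr => j _; rewrite kronE.
Qed.

Lemma kronDl m1 n1 m2 n2 (A A' : 'M[C]_(m1, n1)) (B : 'M[C]_(m2, n2)) :
  kron (A + A') B = kron A B + kron A' B.
Proof. by apply/matrixP => i j; rewrite !mxE mulrDl. Qed.
Lemma kronDr m1 n1 m2 n2 (A : 'M[C]_(m1, n1)) (B B' : 'M[C]_(m2, n2)) :
  kron A (B + B') = kron A B + kron A B'.
Proof. by apply/matrixP => i j; rewrite !mxE mulrDr. Qed.
Lemma kronNl m1 n1 m2 n2 (A : 'M[C]_(m1, n1)) (B : 'M[C]_(m2, n2)) :
  kron (- A) B = - kron A B.
Proof. by apply/matrixP => i j; rewrite !mxE mulNr. Qed.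
Lemma kronNr m1 n1 m2 n2 (A : 'M[C]_(m1, n1)) (B : 'M[C]_(m2, n2)) :
  kron A (- B) = - kron A B.
Proof. by apply/matrixP => i j; rewrite !mxE mulrN. Qed.
Lemma kronBl m1 n1 m2 n2 (A A' : 'M[C]_(m1, n1)) (B : 'M[C]_(m2, n2)) :
  kron (A - A') B = kron A B - kron A' B.
Proof. by rewrite kronDl kronNl. Qed.
Lemma kronBr m1 n1 m2 n2 (A : 'M[C]_(m1, n1)) (B B' : 'M[C]_(m2, n2)) :
  kron A (B - B') = kron A B - kron A B'.
Proof. by rewrite kronDr kronNr. Qed.

Lemma adjmx_mul m n p (A : 'M[C]_(m, n)) (B : 'M[C]_(n, p)) :
  adjmx (A *m B) = adjmx B *m adjmx A.
Proof. by rewrite /adjmx map_mxM trmx_mul. Qed.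

Lemma adjmxK m n (A : 'M[C]_(m, n)) : adjmx (adjmx A) = A.
Proof. by apply/matrixP => i j; rewrite !mxE conjCK. Qed.

Lemma adjmx_kron m1 n1 m2 n2 (A : 'M[C]_(m1, n1)) (B : 'M[C]_(m2, n2)) :
  adjmx (kron A B) = kron (adjmx A) (adjmx B).
Proof. by apply/matrixP => i j; rewrite !mxE rmorphM. Qed.

Lemma gram00 n (u : 'cV[C]_n) : 0 <= (adjmx u *m u) 0 0.
Proof.
rewrite mxE; apply: sumr_ge0 => k _; rewrite !mxE mulrC; exact: mul_conjC_ge0.
Qed.

Lemma psd_gram m n (M : 'M[C]_(m, n)) : psd (adjmx M *m M).
Proof.
move=> v; have -> : adjmx v *m (adjmx M *m M) *m v = adjmx (M *m v) *m (M *m v).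
  by rewrite adjmx_mul !mulmxA.
exact: gram00.
Qed.

End Gen.



Section Herm.
Variable C : numClosedFieldType.

Definition qf n (A : 'M[C]_n) (u v : 'cV[C]_n) := (adjmx u *m A *m v) 0 0.

Lemma adjmxD m n (A B : 'M[C]_(m, n)) : adjmx (A + B) = adjmx A + adjmx B.
Proof. by apply/matrixP => i j; rewrite !mxE rmorphD. Qed.
Lemma adjmxZ m n (a : C) (A : 'M[C]_(m, n)) : adjmx (a *: A) = a^* *: adjmx A.
Proof. by apply/matrixP => i j; rewrite !mxE rmorphM. Qed.

Lemma qf_delta n (A : 'M[C]_n) i j : qf A (delta_mx i 0) (delta_mx j 0) = A i j.
Proof.
rewrite /qf.
have -> : adjmx (delta_mx i 0 : 'cV[C]_n) = delta_mx 0 i.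
  by apply/matrixP => k l; rewrite !mxE rmorph_nat andbC.
by rewrite -rowE -colE !mxE.
Qed.

Lemma qfDl n (A : 'M[C]_n) u u' v : qf A (u + u') v = qf A u v + qf A u' v.
Proof. by rewrite /qf adjmxD !mulmxDl mxE. Qed.
Lemma qfDr n (A : 'M[C]_n) u v v' : qf A u (v + v') = qf A u v + qf A u v'.
Proof. by rewrite /qf !mulmxDr mxE. Qed.
Lemma qfZl n (A : 'M[C]_n) c u v : qf A (c *: u) v = c^* * qf A u v.
Proof. by rewrite /qf adjmxZ -!scalemxAl mxE. Qed.
Lemma qfZr n (A : 'M[C]_n) c u v : qf A u (c *: v) = c * qf A u v.
Proof. by rewrite /qf -!scalemxAr mxE. Qed.

Lemma qf_comb n (A : 'M[C]_n) i j (c : C) :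
  qf A (delta_mx i 0 + c *: delta_mx j 0) (delta_mx i 0 + c *: delta_mx j 0)
  = A i i + c * A i j + c^* * A j i + c^* * c * A j j.
Proof. rewrite !qfDl !qfDr !qfZl !qfZr !qf_delta; ring. Qed.

Lemma psd_herm n (A : 'M[C]_n) : psd A -> forall i j, (A j i)^* = A i j.
Proof.
move=> hA i j.
have real c : (qf A (delta_mx i 0 + c *: delta_mx j 0) (delta_mx i 0 + c *: delta_mx j 0))^*
   = qf A (delta_mx i 0 + c *: delta_mx j 0) (delta_mx i 0 + c *: delta_mx j 0).
  exact/geC0_conj/hA.
have hii : (A i i)^* = A i i by rewrite -qf_delta; exact/geC0_conj/hA.
have hjj : (A j j)^* = A j j by rewrite -qf_delta; exact/geC0_conj/hA.
have h1 := real 1; have h2 := real 'i.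
rewrite !qf_comb !rmorphD !rmorphM /= in h1 h2.
rewrite ?conjCK conjCi rmorph1 hii hjj in h1 h2.
move: h1 h2; set x := A i j; set y := A j i; set a := A i i; set b := A j j.
move=> h1 h2.
have hi : ('i : C) * 'i = -1 by rewrite -expr2 sqrCi.
have key : 2 * (y^* - x) =
  ((a + 1 * x^* + 1 * y^* + 1 * 1 * b) - (a + 1 * x + 1 * y + 1 * 1 * b))
  - 'i * ((a + - 'i * x^* + 'i * y^* + 'i * - 'i * b) - (a + 'i * x + - 'i * y + - 'i * 'i * b)).
  ring: hi.
rewrite h1 h2 !subrr mulr0 subr0 in key.
move/eqP: key; rewrite mulf_eq0 pnatr_eq0 /= subr_eq0 => /eqP //.
Qed.

Local Open Scope sesquilinear_scope.
Import Num.Def.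

Lemma adjmxE m n (A : 'M[C]_(m, n)) : adjmx A = A ^t conjC.
Proof. by apply/matrixP => i j; rewrite !mxE. Qed.

Lemma psd_factor n (A : 'M[C]_n) : psd A -> exists M : 'M[C]_n, A = adjmx M *m M.
Proof.
move=> hA.
have hAt : adjmx A = A by apply/matrixP => i j; rewrite !mxE psd_herm.
have hN : A \is normalmx by apply/normalmxP; rewrite -adjmxE hAt.
have := orthomx_spectralP hN.
set P := spectralmx A; set d := spectral_diag A => eA.
have hU : P \is unitarymx by exact: spectral_unitarymx.
have hPP : P *m adjmx P = 1%:M by rewrite adjmxE; exact/unitarymxP.
rewrite invmx_unitary // -adjmxE in eA.
have hD : P *m A *m adjmx P = diag_mx d.
  by rewrite eA !mulmxA hPP mul1mx -mulmxA hPP mulmx1.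
have d_ge0 i : 0 <= d 0 i.
  have := hA (adjmx P *m delta_mx i 0).
  rewrite adjmx_mul adjmxK.
  have -> : adjmx (delta_mx i 0 : 'cV[C]_n) = delta_mx 0 i.
    by apply/matrixP => k l; rewrite !mxE rmorph_nat andbC.
  rewrite !mulmxA.
rewrite -(mulmxA _ P A) -(mulmxA _ (P *m A) (adjmx P)) hD.
  by rewrite -rowE -colE !mxE ?eqxx ?mulr1n.
exists (diag_mx (\row_i sqrtC (d 0 i)) *m P).
rewrite adjmx_mul !mulmxA -(mulmxA _ _ (diag_mx _)).
have -> : adjmx (diag_mx (\row_i sqrtC (d 0 i))) *m diag_mx (\row_i sqrtC (d 0 i))
   = diag_mx d.
  apply/matrixP => k l; rewrite mul_mx_diag !mxE.
  case: (eqVneq k l) => [->|nkl].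
    by rewrite !mulr1n geC0_conj ?sqrtC_ge0 // -expr2 sqrtCK.
  by rewrite !mulr0n rmorph0 mul0r.
by rewrite eA.
Qed.

Lemma tr_psd n (N R : 'M[C]_n) : psd N -> psd R -> 0 <= \tr (N *m R).
Proof.
move=> hN /psd_factor [M ->].
rewrite mulmxA mxtrace_mulC mulmxA /mxtrace; apply: sumr_ge0 => i _.
have := hN (adjmx M *m delta_mx i 0).
rewrite adjmx_mul adjmxK.
have -> : adjmx (delta_mx i 0 : 'cV[C]_n) = delta_mx 0 i.
  by apply/matrixP => k l; rewrite !mxE rmorph_nat andbC.
rewrite !mulmxA -(mulmxA _ M N) -(mulmxA _ (M *m N) (adjmx M)).
by rewrite -rowE -colE !mxE.
Qed.

Lemma psd_kron m n (A : 'M[C]_m) (B : 'M[C]_n) : psd A -> psd B -> psd (kron A B).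
Proof.
move=> /psd_factor [M ->] /psd_factor [K ->].
rewrite -mulmx_kron -adjmx_kron; exact: psd_gram.
Qed.

End Herm.



Section Conc.
Variable C : numClosedFieldType.

Definition vec m n (f : 'I_m -> 'I_n -> C) : 'cV[C]_(m * n) :=
  \col_k f (split_idx k).1 (split_idx k).2.

Lemma vecE m n (f : 'I_m -> 'I_n -> C) i j : vec f (mxvec_index i j) 0 = f i j.
Proof. by rewrite mxE split_mi. Qed.

Lemma trK m n (A : 'M[C]_m) (B : 'M[C]_n) (K : 'M[C]_(m * n)) :
  \tr (kron A B *m K) = \sum_i1 \sum_i2 \sum_j1 \sum_j2
     A i1 j1 * B i2 j2 * K (mxvec_index j1 j2) (mxvec_index i1 i2).
Proof.
rewrite /mxtrace sum_pair; apply: eq_bigr => i1 _; apply: eq_bigr => i2 _.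
rewrite mxE sum_pair; apply: eq_bigr => j1 _; apply: eq_bigr => j2 _.
by rewrite kronE.
Qed.

Lemma trE m n (K : 'M[C]_(m * n)) :
  \tr K = \sum_i1 \sum_i2 K (mxvec_index i1 i2) (mxvec_index i1 i2).
Proof. by rewrite /mxtrace sum_pair. Qed.

Lemma quadE m n (f : 'I_m -> 'I_n -> C) (K : 'M[C]_(m * n)) :
  (adjmx (vec f) *m K *m vec f) 0 0 = \sum_i1 \sum_i2 \sum_j1 \sum_j2
     (f i1 i2)^* * K (mxvec_index i1 i2) (mxvec_index j1 j2) * f j1 j2.
Proof.
rewrite mxE sum_pair.
under eq_bigr => j1 _ do under eq_bigr => j2 _ do rewrite mxE big_distrl sum_pair /=.
rewrite pair_big; under eq_bigr => p _ do rewrite pair_big /=.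
rewrite exchange_big /= [RHS]pair_big; under [RHS]eq_bigr => p _ do rewrite pair_big /=.
apply: eq_bigr => p _; apply: eq_bigr => q _.
by rewrite !mxE !split_mi.
Qed.
Definition EE (rho : 'M[C]_(2 * 2)) (x y : bool) :=
  \tr (kron (obs C x) (obs C y) *m rho).

Lemma bound4 (rho : 'M[C]_(2 * 2)) (s1 s2 : C) :
  psd rho -> \tr rho = 1 -> s1 * s1 = 1 -> s2 * s2 = 1 -> s1^* = s1 -> s2^* = s2 ->
  s1 * (EE rho false true + EE rho true false) + s2 * (EE rho false false - EE rho true true)
  <= 2 * sqrtC 2.
Proof.
move=> hp htr h1 h2 c1 c2.
set s := sqrtC 2.
have hs : s * s = 2 by rewrite -expr2 sqrtCK.
have s0 : 0 <= s by rewrite sqrtC_ge0 ler0n.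
have cs : s^* = s by rewrite geC0_conj.
have hi : ('i : C) * 'i = -1 by rewrite -expr2 sqrCi.
set al := s2 + 'i * s1.
pose w := vec (fun i j : 'I_2 => if (val i == 0%N) && (val j == 0%N) then s
               else if (val i == 1%N) && (val j == 1%N) then - al else 0).
pose u := vec (fun i j : 'I_2 => if (val i == 0%N) && (val j == 1%N) then 1 else 0).
pose v := vec (fun i j : 'I_2 => if (val i == 1%N) && (val j == 0%N) then 1 else 0).
have key : 2 * s * \tr rho - (s1 * (EE rho false true + EE rho true false)
   + s2 * (EE rho false false - EE rho true true))
  = s * (adjmx w *m rho *m w) 0 0 + 2 * s * (adjmx u *m rho *m u) 0 0
    + 2 * s * (adjmx v *m rho *m v) 0 0.
  rewrite /EE !trK trE !quadE.
  rewrite !big_ord_recl !big_ord0 /=.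
  rewrite !mxE /= /al !rmorph0 !rmorph1 !rmorphN !rmorphD !rmorphM /= conjCi c1 c2 cs.
  ring: hi hs h1 h2.
have s20 : 0 <= 2 * s by rewrite mulr_ge0 ?ler0n.
have : 0 <= 2 * s * \tr rho - (s1 * (EE rho false true + EE rho true false)
   + s2 * (EE rho false false - EE rho true true)).
  rewrite key; apply: addr_ge0; [apply: addr_ge0|]; apply: mulr_ge0 => //; exact: hp.
by rewrite htr mulr1 subr_ge0.
Qed.

End Conc.



Section Core.
Variable C : numClosedFieldType.

Definition sg (a : bool) : C := if a then -1 else 1.

Definition Msum (P : behaviour C) : C :=
  \sum_(a : bool) \sum_(b : bool) \sum_(c : bool) (sg a * sg b * sg c) *
   (P a b c false false true + P a b c false true false + P a b c true false false
    - P a b c true true true).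

Lemma Msum_ext (P Q : behaviour C) : (forall a b c x y z, P a b c x y z = Q a b c x y z) ->
  Msum P = Msum Q.
Proof. by move=> h; rewrite /Msum; do 3 (apply: eq_bigr => ? _); rewrite !h. Qed.

Lemma Msum_mermin V : Msum (mermin V) = 4 * V.
Proof. rewrite /Msum !big_bool /mermin /sg /=. by field. Qed.

Lemma Msum_sum n (F : 'I_n -> behaviour C) :
  Msum (fun a b c x y z => \sum_l F l a b c x y z) = \sum_l Msum (F l).
Proof.
rewrite /Msum.
under eq_bigr => a _ do under eq_bigr => b _ do under eq_bigr => c _ do
  rewrite -!big_split /= -sumrB mulr_sumr.
under eq_bigr => a _ do under eq_bigr => b _ do rewrite exchange_big.
under eq_bigr => a _ do rewrite exchange_big.
rewrite exchange_big /=.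
apply: eq_bigr => l _; do 3 (apply: eq_bigr => ? _); by [].
Qed.

Lemma Msum_model (T : bool -> bool -> bool -> bool -> C) (R : bool -> bool -> C) r :
  Msum (fun a b c x y z => r * T a b x y * R c z) =
  r * ((R false false - R true false) *
         ((T false false false true - T false true false true - T true false false true + T true true false true)
        + (T false false true false - T false true true false - T true false true false + T true true true false))
     + (R false true - R true true) *
         ((T false false false false - T false true false false - T true false false false + T true true false false)
        - (T false false true true - T false true true true - T true false true true + T true true true true))).
Proof. rewrite /Msum !big_bool /sg /=. ring. Qed.

Lemma MA_diff x : MA C false x - MA C true x = obs C x.
Proof.
rewrite /MA /proj_of; apply/matrixP => i j; rewrite !mxE; by field.
Qed.
Lemma MB_diff y : MB C false y - MB C true y = obs C y.
Proof. exact: MA_diff. Qed.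

Lemma Tcomb (K : 'M[C]_(2 * 2)) x y :
  \tr (kron (MA C false x) (MB C false y) *m K) - \tr (kron (MA C false x) (MB C true y) *m K)
  - \tr (kron (MA C true x) (MB C false y) *m K) + \tr (kron (MA C true x) (MB C true y) *m K)
  = EE K x y.
Proof.
rewrite /EE -MA_diff -MB_diff kronBl !kronBr !mulmxBl !linearB /=.
ring.
Qed.

Lemma Qbound (rho : 'M[C]_(2 * 2)) p t q u :
  psd rho -> \tr rho = 1 -> 0 <= p -> 0 <= t -> 0 <= q -> 0 <= u -> p + t = 1 -> q + u = 1 ->
  (p - t) * (EE rho false true + EE rho true false)
  + (q - u) * (EE rho false false - EE rho true true) <= 2 * sqrtC 2.
Proof.
move=> hp htr p0 t0 q0 u0 hpt hqu.
set e1 := EE rho false true + EE rho true false.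
set e2 := EE rho false false - EE rho true true.
set S := 2 * sqrtC 2.
have c1 : (1 : C)^* = 1 by rewrite rmorph1.
have cN : (-1 : C)^* = -1 by rewrite rmorphN1.
have m1 : (1 : C) * 1 = 1 by rewrite mulr1.
have mN : (-1 : C) * -1 = 1 by rewrite mulrNN mulr1.
have b1 : e1 + e2 <= S.
  by have := bound4 hp htr m1 m1 c1 c1; rewrite !mul1r.
have b2 : e1 - e2 <= S.
  by have := bound4 hp htr m1 mN c1 cN; rewrite !mul1r mulN1r.
have b3 : - e1 + e2 <= S.
  by have := bound4 hp htr mN m1 cN c1; rewrite !mul1r mulN1r.
have b4 : - e1 - e2 <= S.
  by have := bound4 hp htr mN mN cN cN; rewrite !mulN1r.
have ht : t = 1 - p by rewrite -hpt addrC addKr.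
have hu : u = 1 - q by rewrite -hqu addrC addKr.
have -> : (p - t) * e1 + (q - u) * e2 =
   p * q * (e1 + e2) + p * u * (e1 - e2) + t * q * (- e1 + e2) + t * u * (- e1 - e2).
  rewrite ht hu; ring.
have -> : S = p * q * S + p * u * S + t * q * S + t * u * S.
  rewrite ht hu; ring.
by rewrite !lerD // ler_wpM2l // mulr_ge0.
Qed.

Lemma core n (r : 'I_n -> C) (rho : 'I_n -> 'M[C]_(2 * 2)) (R : 'I_n -> bool -> bool -> C) V :
  prob_vec r -> (forall l, psd (rho l)) -> (forall l, \tr (rho l) = 1) ->
  (forall l c z, 0 <= R l c z) -> (forall l z, R l false z + R l true z = 1) ->
  (forall a b c x y z, mermin V a b c x y z =
     \sum_l r l * \tr (kron (MA C a x) (MB C b y) *m rho l) * R l c z) ->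
  4 * V <= 2 * sqrtC 2.
Proof.
move=> [r0 r1] hp htr R0 R1 hP.
rewrite -Msum_mermin (Msum_ext hP) Msum_sum.
under eq_bigr => l _ do rewrite Msum_model !Tcomb.
have -> : 2 * sqrtC 2 = \sum_l r l * (2 * sqrtC 2) :> C by rewrite -mulr_suml r1 mul1r.
apply: ler_sum => l _.
apply: ler_wpM2l => //; apply: Qbound => //.
Qed.

End Core.



Section Neg.
Variable C : numClosedFieldType.

Lemma big_contra (V : C) : 1 / sqrtC 2 < V -> 4 * V <= 2 * sqrtC 2 -> False.
Proof.
move=> hV hle.
set s := sqrtC 2 in hV hle.
have hs : s * s = 2 by rewrite -expr2 sqrtCK.
have s0 : s != 0 by apply/eqP => e; move: hs; rewrite e mul0r => /eqP; rewrite eq_sym pnatr_eq0.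
have : 4 * (1 / s) < 4 * V by rewrite ltr_pM2l ?ltr0n.
have -> : 4 * (1 / s) = 2 * s.
  apply: (mulIf s0); rewrite -[RHS]mulrA hs -mulrA div1r mulVf // mulr1; by [] || ring.
move=> h; have := lt_le_trans h hle; by rewrite ltxx.
Qed.

Lemma no_lhs (V : C) : 1 / sqrtC 2 < V -> ~ lhs_lhv (mermin V).
Proof.
move=> hV [n [q [rA [rB [pl [hq [hA [hB [hpl hP]]]]]]]]].
apply: (big_contra hV).
apply: (@core C n q (fun l => kron (rA l) (rB l)) pl) => //.
- by move=> l; apply: psd_kron; [case: (hA l) | case: (hB l)].
- by move=> l; rewrite tr_kron; case: (hA l) => _ ->; case: (hB l) => _ ->; rewrite mulr1.
- by move=> l c z; case: (hpl l) => h _; apply: h.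
- by move=> l z; case: (hpl l) => _ h; apply: h.
- move=> a b c x y z; rewrite hP; apply: eq_bigr => l _.
  by rewrite mulmx_kron tr_kron mulrA.
Qed.

Lemma no_sep (V : C) : 1 / sqrtC 2 < V -> ~ ab_c_separable_model (mermin V).
Proof.
move=> hV [d [n [r [rAB [rC [N [hr [hAB [hC [hN hP]]]]]]]]]].
apply: (big_contra hV).
apply: (@core C n r rAB (fun l c z => \tr (N c z *m rC l))) => //.
- by move=> l; case: (hAB l).
- by move=> l; case: (hAB l).
- move=> l c z; apply: tr_psd; [case: (hN z) => h _; exact: h | by case: (hC l)].
- move=> l z; rewrite -mxtraceD -mulmxDl; case: (hN z) => _ ->.
  by rewrite mul1mx; case: (hC l).
- move=> a b c x y z; rewrite hP mulmx_sumr linear_sum /=; apply: eq_bigr => l _.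
  by rewrite -scalemxAr mxtraceZ mulmx_kron tr_kron mulrA.
Qed.

End Neg.



Section Model.
Variable C : numClosedFieldType.

Lemma psdD n (X Y : 'M[C]_n) : psd X -> psd Y -> psd (X + Y).
Proof. by move=> hX hY v; rewrite mulmxDr mulmxDl mxE addr_ge0. Qed.
Lemma psdZ n (a : C) (X : 'M[C]_n) : 0 <= a -> psd X -> psd (a *: X).
Proof. by move=> ha hX v; rewrite -scalemxAr -scalemxAl mxE mulr_ge0. Qed.
Lemma psd_outer n (w : 'cV[C]_n) : psd (w *m adjmx w).
Proof. by rewrite -{1}(adjmxK w); apply: psd_gram. Qed.

Lemma tr_outer m n (K : 'M[C]_(m * n)) f :
  \tr (K *m (vec f *m adjmx (vec f))) = (adjmx (vec f) *m K *m vec f) 0 0.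
Proof. by rewrite mulmxA mxtrace_mulC trace_mx11 mulmxA. Qed.

Lemma normE m n (f : 'I_m -> 'I_n -> C) :
  (adjmx (vec f) *m vec f) 0 0 = \sum_i1 \sum_i2 (f i1 i2)^* * f i1 i2.
Proof.
rewrite mxE sum_pair; apply: eq_bigr => i _; apply: eq_bigr => j _.
by rewrite !mxE split_mi.
Qed.

Definition ww (g : C) := vec (fun i j : 'I_2 => if (val i == 0%N) && (val j == 0%N) then 1
   else if (val i == 1%N) && (val j == 1%N) then g else 0).
Definition k11 := vec (fun i j : 'I_2 => if (val i == 1%N) && (val j == 1%N) then (1 : C) else 0).
Definition rhoAB (g : C) : 'M[C]_(2 * 2) :=
  2^-1 *: (ww g *m adjmx (ww g) + (1 - g * g^*) *: (k11 *m adjmx k11)).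

Lemma rhoAB_psd g : 0 <= 1 - g * g^* -> psd (rhoAB g).
Proof.
move=> h; apply: psdZ; first by rewrite invr_ge0 ler0n.
by apply: psdD; [apply: psd_outer | apply: psdZ => //; apply: psd_outer].
Qed.

Lemma rhoAB_tr g : \tr (rhoAB g) = 1.
Proof.
rewrite /rhoAB mxtraceZ mxtraceD mxtraceZ !(mxtrace_mulC (vec _)) !trace_mx11 !normE.
rewrite !big_ord_recl !big_ord0 /= !rmorph0 !rmorph1.
by field.
Qed.

Lemma Tform (A B : 'M[C]_2) g :
  \tr (kron A B *m rhoAB g) = 2^-1 * (A ord0 ord0 * B ord0 ord0
     + A (lift ord0 ord0) (lift ord0 ord0) * B (lift ord0 ord0) (lift ord0 ord0)
     + g * (A ord0 (lift ord0 ord0) * B ord0 (lift ord0 ord0))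
     + g^* * (A (lift ord0 ord0) ord0 * B (lift ord0 ord0) ord0)).
Proof.
rewrite /rhoAB -scalemxAr mxtraceZ mulmxDr mxtraceD -scalemxAr mxtraceZ !tr_outer !quadE.
rewrite !big_ord_recl !big_ord0 /= !rmorph0 !rmorph1 !kronE.
ring.
Qed.

Lemma tr_outerG n (K : 'M[C]_n) (w : 'cV[C]_n) :
  \tr (K *m (w *m adjmx w)) = (adjmx w *m K *m w) 0 0.
Proof. by rewrite mulmxA mxtrace_mulC trace_mx11 mulmxA. Qed.

Lemma adj_delta n (l : 'I_n) : adjmx (delta_mx l 0 : 'cV[C]_n) = delta_mx 0 l.
Proof. by apply/matrixP => k m; rewrite !mxE rmorph_nat andbC. Qed.

Lemma deltaE n (l : 'I_n) : delta_mx l l = (delta_mx l 0 : 'cV[C]_n) *m adjmx (delta_mx l 0).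
Proof. by rewrite adj_delta mul_delta_mx. Qed.

Lemma tr_delta_mul n (A : 'M[C]_n) l : \tr (A *m delta_mx l l) = A l l.
Proof. by rewrite deltaE tr_outerG adj_delta -rowE -colE !mxE. Qed.

Lemma delta_state n (l : 'I_n) : is_state (delta_mx l l : 'M[C]_n).
Proof.
split; first by rewrite deltaE; apply: psd_outer.
by rewrite -(mul1mx (delta_mx l l)) tr_delta_mul mxE eqxx.
Qed.

Lemma psd_diag n (d : 'rV[C]_n) : (forall i, 0 <= d 0 i) -> psd (diag_mx d).
Proof.
move=> hd v; rewrite mul_mx_diag mxE; apply: sumr_ge0 => k _.
rewrite !mxE -mulrA mulrC -mulrA; apply: mulr_ge0 => //.
exact: mul_conjC_ge0.
Qed.

Definition fC (l : 'I_4) (z : bool) : bool := if z then (2 <= val l)%N else odd (val l).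
Definition NN (c z : bool) : 'M[C]_4 := diag_mx (\row_l (if c == fC l z then 1 else 0)).

Lemma NN_povm z : is_povm (NN^~ z).
Proof.
split.
  by move=> c; apply: psd_diag => i; rewrite mxE; case: ifP => _; rewrite ?ler01 ?lexx.
apply/matrixP => i j; rewrite !mxE; case: (fC i z); by rewrite /= mul0rn ?add0r ?addr0.
Qed.

Definition sig1 (l : 'I_4) : C := if (val l < 2)%N then 1 else -1.
Definition sig2 (l : 'I_4) : C := if odd (val l) then -1 else 1.
Definition gg (V : C) l := V * (sig1 l + 'i * sig2 l).

Lemma sig1_sq l : sig1 l * sig1 l = 1.
Proof. by rewrite /sig1; case: ifP => _; rewrite ?mulr1 ?mulrNN ?mulr1. Qed.
Lemma sig2_sq l : sig2 l * sig2 l = 1.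
Proof. by rewrite /sig2; case: ifP => _; rewrite ?mulr1 ?mulrNN ?mulr1. Qed.
Lemma sig1_conj l : (sig1 l)^* = sig1 l.
Proof. by rewrite /sig1; case: ifP => _; rewrite ?rmorph1 ?rmorphN1. Qed.
Lemma sig2_conj l : (sig2 l)^* = sig2 l.
Proof. by rewrite /sig2; case: ifP => _; rewrite ?rmorph1 ?rmorphN1. Qed.

Lemma gg_conj V l : V^* = V -> (gg V l)^* = V * (sig1 l - 'i * sig2 l).
Proof.
move=> hV; rewrite /gg rmorphM rmorphD rmorphM /= conjCi hV sig1_conj sig2_conj.
by rewrite mulNr.
Qed.

Lemma MAE a x :
  [/\ MA C a x ord0 ord0 = 2^-1, MA C a x (lift ord0 ord0) (lift ord0 ord0) = 2^-1,
      MA C a x ord0 (lift ord0 ord0) = (-1) ^+ a * 2^-1 * (if x then - 'i else 1)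
    & MA C a x (lift ord0 ord0) ord0 = (-1) ^+ a * 2^-1 * (if x then 'i else 1)].
Proof.
have e01 : ((ord0 : 'I_2) == lift ord0 ord0) = false by [].
have e10 : ((lift ord0 ord0 : 'I_2) == ord0) = false by [].
by case: a; case: x; rewrite /MA /proj_of /obs /sigma_x /sigma_y !mxE ?e01 ?e10 ?eqxx /=;
  split; field.
Qed.

Lemma model_eq V a b c x y z : V^* = V ->
  mermin V a b c x y z =
  \sum_(l < 4) 4^-1 * (\tr (kron (MA C a x) (MB C b y) *m rhoAB (gg V l))
                       * \tr (NN c z *m delta_mx l l)).
Proof.
move=> hV.
under eq_bigr => l _ do rewrite Tform tr_delta_mul gg_conj //.
have hi : ('i : C) * 'i = -1 by rewrite -expr2 sqrCi.
have [A1 A2 A3 A4] := MAE a x.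
have [B1 B2 B3 B4] := MAE b y.
have eB : MB C b y = MA C b y := erefl.
rewrite eB A1 A2 A3 A4 B1 B2 B3 B4; clear A1 A2 A3 A4 B1 B2 B3 B4 eB.
rewrite !big_ord_recl big_ord0 /gg /sig1 /sig2 /NN !mxE !eqxx /=.
rewrite /mermin !signr_addb.
case: c; case: x; case: y; case: z; rewrite /=; by field: hi.
Qed.

End Model.



Section Fin.
Variable C : numClosedFieldType.

Lemma sep_model (V : C) : 0 < V -> V <= 1 / sqrtC 2 -> ab_c_separable_model (mermin V).
Proof.
move=> hV0 hV.
have cV : V^* = V by apply: geC0_conj; exact: ltW.
exists 4%N, 4%N, (fun _ => 4^-1), (fun l => rhoAB (gg V l)), (fun l => delta_mx l l), (@NN C).
split.
  split => [l|]; first by rewrite invr_ge0 ler0n.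
  by rewrite !big_ord_recl big_ord0; field.
split.
  move=> l; split; last exact: rhoAB_tr.
  apply: rhoAB_psd.
  set s := sqrtC 2 in hV.
  have hs : s * s = 2 by rewrite -expr2 sqrtCK.
  have s0 : s != 0 by apply/eqP => e; move: hs; rewrite e mul0r => /eqP; rewrite eq_sym pnatr_eq0.
  have hi : ('i : C) * 'i = -1 by rewrite -expr2 sqrCi.
  rewrite gg_conj //.
  have -> : gg V l * (V * (sig1 C l - 'i * sig2 C l)) = 2 * (V * V).
    by rewrite /gg; have := @sig1_sq C l; have := @sig2_sq C l; move=> h2 h1; ring: hi h1 h2.
  have hVV : V * V <= (1 / s) * (1 / s) by apply: ler_pM => //; exact: ltW.
  have h12 : (1 / s) * (1 / s) = 2^-1.
    by rewrite !div1r -invfM hs.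
  rewrite h12 in hVV.
  have : 2 * (V * V) <= 2 * 2^-1 by rewrite ler_pM2l ?ltr0n.
  by rewrite mulfV ?pnatr_eq0 // => h; rewrite subr_ge0.
split; first by move=> l; exact: delta_state.
split; first exact: NN_povm.
move=> rho a b c x y z; rewrite /rho mulmx_sumr linear_sum /= model_eq //.
apply: eq_bigr => l _.
by rewrite -[in RHS]scalemxAr [in RHS]mxtraceZ mulmx_kron tr_kron.
Qed.

End Fin.

Unset Implicit Arguments.

Theorem proposition6 (C : numClosedFieldType) (V : C) (hV0 : 0 < V) (hV1 : V <= 1) :
  tripartite_steering (mermin V) <-> 1 / sqrtC 2 < V.
Proof.
split.
  move=> [_ hns].
  have s0 : 0 < 1 / sqrtC 2 :> C.
    by rewrite div1r invr_gt0 sqrtC_gt0 ltr0n.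
  have rV : V \is Num.real by exact: gtr0_real.
  have rs : (1 / sqrtC 2 : C) \is Num.real by exact: gtr0_real.
  rewrite real_ltNge //; apply/negP => hle.
  by apply: hns; apply: sep_model.
move=> hV; split; [exact: no_lhs | exact: no_sep].
Qed.
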